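(* For any $\zeta\ge1$ there exists an $O(\zeta)$-round deterministic $\mathsf{CONGEST}$ algorithm that lets each vertex $u$ of $G$ compute $f_u^\ast(d)$ for all $d\in[\zeta]=\{1,\dots,\zeta\}$.
   Context: $G=(V,E)$ is an unweighted directed graph with $n=|V|$, also the communication network (communication over edges in both directions). $\mathsf{CONGEST}$: synchronous rounds, each vertex may send an $O(\log n)$-bit message to each neighbour per round, unique identifiers, unlimited local computation. $P=(s=v_0,v_1,\dots,v_{h_{st}}=t)$ is a given shortest $s$-$t$ path; the endpoints of each edge of $P$ know it belongs to $P$ and each $v_i$ knows its index $i$. For a vertex $u$ and integer $d\ge 0$, $f_u^\ast(d)$ is the largest index $j$ such that there exists a path from $u$ to $v_j$ of length exactly $d$ avoiding all edges of $P$; if no such $j$ exists, $f_u^\ast(d)=-\infty$. *)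

(* Defs.v *)
From mathcomp Require Import all_boot.
Set Implicit Arguments.
Unset Strict Implicit.
Unset Printing Implicit Defensive.

Record LocalInput := {
  li_n : nat;
  li_id : nat;
  li_out : nat -> bool;   (* ids of out-neighbours *)
  li_in : nat -> bool;    (* ids of in-neighbours *)
  li_Pout : nat -> bool;  (* ids w such that (v,w) is an edge of P *)
  li_Pin : nat -> bool;   (* ids w such that (w,v) is an edge of P *)
  li_idx : option nat     (* Some i iff v = v_i *)
}.

Definition Msg := seq bool.
Definition History := seq (nat -> Msg).     (* round r: sender id |-> message
                                               ([::] = no message) *)

(* A deterministic algorithm (unlimited local computation):
   alg_send r inp h k = message sent in round r to the neighbour with id k,
   given the local input and the history of received messages;
   alg_out inp h d = the vertex's output for f_u^*(d) (None = -infinity). *)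
Record Algorithm := {
  alg_send : nat -> LocalInput -> History -> nat -> Msg;
  alg_out : LocalInput -> History -> nat -> option nat
}.

Section Model.
Variables (n : nat) (E : rel 'I_n) (id : 'I_n -> nat) (s : 'I_n) (ps : seq 'I_n).

(* P = (s = v_0, ..., v_h = t) with h = size ps *)
Definition pv (i : nat) : 'I_n := nth s (s :: ps) i.

Definition onP (x y : 'I_n) : bool :=
  has (fun i => (pv i == x) && (pv i.+1 == y)) (iota 0 (size ps)).

(* communication over edges in both directions *)
Definition adj (v w : 'I_n) : bool := E v w || E w v.

Definition is_shortest_path : Prop :=
  path E s ps /\
  forall q : seq 'I_n, path E s q -> last s q = last s ps -> size ps <= size q.

Definition local_input (v : 'I_n) : LocalInput := {|
  li_n := n;
  li_id := id v;
  li_out := fun k => [exists w, (id w == k) && E v w];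
  li_in := fun k => [exists w, (id w == k) && E w v];
  li_Pout := fun k => [exists w, [&& id w == k, E v w & onP v w]];
  li_Pin := fun k => [exists w, [&& id w == k, E w v & onP w v]];
  li_idx := if v \in s :: ps then Some (index v (s :: ps)) else None
|}.

(* Synchronous execution: hist A r v = messages received by v in rounds
   0, ..., r-1. *)
Fixpoint hist (A : Algorithm) (r : nat) : 'I_n -> History :=
  match r with
  | 0 => fun _ => [::]
  | r'.+1 =>
      let h := hist A r' in
      fun v => rcons (h v) (fun k =>
        match [pick w | (id w == k) && adj v w] with
        | Some w => alg_send A r' (local_input w) (h w) (id v)
        | None => [::]
        end)
  end.

Definition reachP (u : 'I_n) (d j : nat) : Prop :=
  exists q : seq 'I_n,
    [/\ path (fun x y => E x y && ~~ onP x y) u q, size q = d & last u q = pv j].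

(* o is f_u^*(d): None encodes -infinity *)
Definition is_fstar (u : 'I_n) (d : nat) (o : option nat) : Prop :=
  match o with
  | None => forall j, j <= size ps -> ~ reachP u d j
  | Some j => [/\ j <= size ps, reachP u d j &
                 forall j', j' <= size ps -> reachP u d j' -> j' <= j]
  end.

End Model.

(* number of bits of n, i.e. Theta(log n) *)
Definition lg (n : nat) : nat := (trunc_log 2 n).+1.

(* Main.v *)
Require Import Defs.
From mathcomp Require Import all_boot.
From mathcomp Require Import zify.

Set Implicit Arguments.
Unset Strict Implicit.
Unset Printing Implicit Defensive.

Fixpoint enc (m j : nat) : seq bool :=
  if m is m'.+1 then odd j :: enc m' j./2 else [::].
Fixpoint dec (l : seq bool) : nat :=
  if l is b :: l' then b + (dec l').*2 else 0.

Lemma size_enc m j : size (enc m j) = m.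
Proof. by elim: m j => //= m IH j; rewrite IH. Qed.

Lemma dec_enc m j : j < 2 ^ m -> dec (enc m j) = j.
Proof.
elim: m j => [|m IH] j /=; first by rewrite expn0; case: j.
move=> hj; rewrite IH; first exact: odd_double_half.
have := odd_double_half j; rewrite -muln2 => e.
move: hj; rewrite expnS -{1}e; case: (odd j) => /=; lia.
Qed.

Definition encO (m : nat) (o : option nat) : Msg :=
  if o is Some j then true :: enc m j else [::].
Definition decO (l : Msg) : option nat :=
  if l is _ :: l' then Some (dec l') else None.

Definition omax (a b : option nat) : option nat :=
  match a, b with
  | Some x, Some y => Some (maxn x y)
  | None, _ => b
  | _, None => a
  end.

Definition ole (a b : option nat) : bool :=
  match a, b with
  | None, _ => true
  | Some _, None => false
  | Some x, Some y => x <= y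
  end.

Definition Fv (kappa : nat) (inp : LocalInput) (h : History) (d : nat) : option nat :=
  if d is d'.+1 then
    foldr (fun k acc => if li_out inp k && ~~ li_Pout inp k
                        then omax (decO (nth (fun _ => [::]) h d' k)) acc else acc)
          None (iota 0 (li_n inp ^ kappa))
  else li_idx inp.

Definition Alg (kappa : nat) : Algorithm := {|
  alg_send := fun r inp h k => encO (lg (li_n inp)) (Fv kappa inp h r);
  alg_out := fun inp h d => Fv kappa inp h d
|}.

Definition ofold (cond : nat -> bool) (g : nat -> option nat) (l : seq nat) :=
  foldr (fun k acc => if cond k then omax (g k) acc else acc) None l.

Lemma fold_spec (cond : nat -> bool) (g : nat -> option nat) (l : seq nat) :
  (forall k, k \in l -> cond k -> ole (g k) (ofold cond g l)) /\
  (ofold cond g l = None \/ exists2 k, k \in l & cond k && (g k == ofold cond g l)).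
Proof.
elim: l => [|k l [IH1 IH2]] /=; first by split => //; left.
rewrite /ofold /= -/(ofold cond g l).
move: (ofold cond g l) IH1 IH2 => o IH1 IH2.
case: ifP => ck; last first.
  split; first by move=> k'; rewrite inE => /orP[/eqP-> | /IH1]; [rewrite ck|].
  case: IH2 => [->|[k' kl ck']]; [by left | right; exists k' => //].
  by rewrite inE kl orbT.
split.
  move=> k'; rewrite inE => /orP[/eqP-> _ | kl ck'].
    by case: (g k) => [x|] //; case Eo: o => [y|] //=; rewrite leq_maxl.
  move: (IH1 _ kl ck'); case: (g k') => [x|] //; case: (g k) => [y|] //;
    case Eo: o IH1 => [z|] //= IH1; rewrite leq_max => ->; rewrite ?orbT //.
case: IH2 => [->|[k' kl /andP[ck' /eqP gk']]].
  right; exists k; first by rewrite inE eqxx.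
  by rewrite ck /=; case: (g k).
case E1 : (g k) => [x|]; last first.
  by right; exists k'; [rewrite inE kl orbT | rewrite ck' gk' /=; case Eo: o gk'].
case E2 : o IH1 gk' => [y|] IH1 gk' /=; last first.
  by right; exists k; [rewrite inE eqxx | rewrite ck E1 eqxx].
right; case: (leqP y x) => hxy.
  by exists k; [rewrite inE eqxx | rewrite ck E1 eqxx].
by exists k'; [rewrite inE kl orbT | rewrite ck' gk' eqxx].
Qed.

Lemma shorten_size (T : eqType) (x : T) (p : seq T) :
  size (shorten x p) <= size p /\ (~~ uniq (x :: p) -> size (shorten x p) < size p).
Proof.
elim: p x => [|y p IH] x /=; first by split.
case: ifP => xin.
  have [h1 _] := IH x; split; first exact: leqW.
  by move=> _; rewrite ltnS.
have [h1 h2] := IH y; split => /=; first by rewrite ltnS.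
move=> nu; rewrite ltnS; apply: h2; move: nu; rewrite /= ?xin /= // => ->; rewrite andbF.
Qed.

Lemma uniq_ps n (E : rel 'I_n) (s : 'I_n) ps :
  is_shortest_path E s ps -> uniq (s :: ps).
Proof.
move=> [hp hmin]; apply/negPn/negP => nu.
have [hp' hl] : path E s (shorten s ps) /\ last s (shorten s ps) = last s ps.
  by case: (shortenP hp).
have := hmin _ hp' hl; have [_ h2] := shorten_size s ps.
by rewrite leqNgt (h2 nu).
Qed.

Lemma size_ps_lt n (s : 'I_n) ps : uniq (s :: ps) -> size ps < n.
Proof.
move=> /card_uniqP h; have := max_card (mem (s :: ps)).
by rewrite h card_ord.
Qed.

Lemma n_lt_lg n : n < 2 ^ lg n.
Proof. exact: trunc_log_ltn. Qed.

Lemma decO_encO m o : (forall j, o = Some j -> j < 2 ^ m) -> decO (encO m o) = o.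
Proof. by case: o => [j|] //= h; rewrite dec_enc // h. Qed.

Definition msg n (E : rel 'I_n) (id : 'I_n -> nat) (s : 'I_n) ps A d (u : 'I_n) :=
  fun k => match [pick w | (id w == k) && adj E u w] with
           | Some w => alg_send A d (local_input E id s ps w) (hist E id s ps A d w) (id u)
           | None => [::]
           end.

Lemma size_hist n (E : rel 'I_n) id s ps A r u : size (hist E id s ps A r u) = r.
Proof. by elim: r u => //= r IH u; rewrite size_rcons IH. Qed.

Lemma nth_hist n (E : rel 'I_n) id s ps A r u d dflt : d < r ->
  nth dflt (hist E id s ps A r u) d = msg E id s ps A d u.
Proof.
elim: r u => // r IH u; rewrite ltnS leq_eqVlt => /orP[/eqP-> | hd] /=.
  by rewrite nth_rcons size_hist ltnn eqxx.
by rewrite nth_rcons size_hist hd IH.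
Qed.

Lemma fstar_intro n (E : rel 'I_n) s ps u d o :
  (forall j, j <= size ps -> reachP E s ps u d j -> exists2 j', o = Some j' & j <= j') ->
  (forall j, o = Some j -> j <= size ps /\ reachP E s ps u d j) ->
  is_fstar E s ps u d o.
Proof.
case: o => [j|] H1 H2 /=.
  have [hj hr] := H2 j erefl; split => // j' hj' hr'.
  by have [j'' [<-]] := H1 j' hj' hr'.
by move=> j hj hr; have [j' ] := H1 j hj hr.
Qed.

Lemma fstar_elim n (E : rel 'I_n) s ps u d o : is_fstar E s ps u d o ->
  (forall j, j <= size ps -> reachP E s ps u d j -> exists2 j', o = Some j' & j <= j') /\
  (forall j, o = Some j -> j <= size ps /\ reachP E s ps u d j).
Proof.
case: o => [j|] /=.
  by move=> [hj hr hm]; split => [j' hj' hr'|j' [<-]] //; exists j => //; apply: hm.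
by move=> H; split => // j hj hr; case: (H j hj hr).
Qed.

Lemma reach_step n (E : rel 'I_n) s ps u d j :
  reachP E s ps u d.+1 j <-> exists w, [/\ E u w, ~~ onP s ps u w & reachP E s ps w d j].
Proof.
split.
  move=> [[|w q] [] //= /andP[/andP[euw nop] hp] [hs] hl].
  by exists w; split => //; exists q.
by move=> [w [euw nop [q [hp hs hl]]]]; exists (w :: q); rewrite /= euw nop hp hs.
Qed.

Lemma main kappa n (E : rel 'I_n) (id : 'I_n -> nat) (s : 'I_n) ps :
  injective id -> (forall v, id v < n ^ kappa) -> uniq (s :: ps) ->
  forall d r u, d <= r ->
  is_fstar E s ps u d
    (Fv kappa (local_input E id s ps u) (hist E id s ps (Alg kappa) r u) d).
Proof.
move=> inj hid U d; elim: d => [|d IH] r u hdr.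
  have -> : Fv kappa (local_input E id s ps u) (hist E id s ps (Alg kappa) r u) 0
    = if u \in s :: ps then Some (index u (s :: ps)) else None by [].
  apply: fstar_intro.
    move=> j hj [q [_ /size0nil qe hl]]; subst q.
    have -> : u = pv s ps j := hl.
    have jl : j < size (s :: ps) by [].
    rewrite /pv mem_nth //; exists j => //; rewrite index_uniq //.
  case: ifP => // uin j [<-]; split.
    by have := index_mem u (s :: ps); rewrite uin.
  by exists [::]; split => //=; rewrite /pv nth_index.
set inp := local_input E id s ps u; set h := hist E id s ps (Alg kappa) r u.
set cond := fun k => li_out inp k && ~~ li_Pout inp k.
set g := fun k => decO (nth (fun _ => [::]) h d k).
have -> : Fv kappa inp h d.+1 = ofold cond g (iota 0 (n ^ kappa)) by [].
have [F1 F2] := fold_spec cond g (iota 0 (n ^ kappa)).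
have K1 : forall k, cond k -> exists w, [/\ id w = k, E u w & ~~ onP s ps u w].
  move=> k; rewrite /cond /= => /andP[/existsP[w /andP[/eqP idw euw]] hn].
  exists w; split => //; apply/negP => onp; move/negP: hn; apply.
  by apply/existsP; exists w; rewrite idw eqxx euw onp.
have K2 : forall w, E u w -> ~~ onP s ps u w -> cond (id w).
  move=> w euw nop; rewrite /cond /=; apply/andP; split.
    by apply/existsP; exists w; rewrite eqxx euw.
  apply/negP => /existsP[w' /and3P[/eqP/inj-> _ onp]].
  by rewrite onp in nop.
have K3 : forall w, E u w ->
    g (id w) = Fv kappa (local_input E id s ps w) (hist E id s ps (Alg kappa) d w) d.
  move=> w euw; rewrite /g /h nth_hist // /msg.
  case: pickP => [w' /andP[/eqP/inj-> _] | none]; last first.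
    by have := none w; rewrite eqxx /adj euw.
  rewrite /= decO_encO // => j hj.
  have [_ H2] := fstar_elim (IH d w (leqnn d)).
  have [hjs _] := H2 j hj.
  apply: leq_ltn_trans (n_lt_lg n).
  exact: leq_trans hjs (ltnW (size_ps_lt U)).
apply: fstar_intro.
  move=> j hj /reach_step [w [euw nop hr]].
  have kin : id w \in iota 0 (n ^ kappa) by rewrite mem_iota add0n hid.
  have := F1 _ kin (K2 w euw nop); rewrite K3 //.
  have [H1 _] := fstar_elim (IH d w (leqnn d)).
  have [j' -> hjj'] := H1 j hj hr.
  case: (ofold _ _ _) => [j''|] //= hj''.
  by exists j'' => //; apply: leq_trans hj''.
move=> j hj; case: F2 => [|[k kin /andP[ck /eqP gk]]]; first by rewrite hj.
have [w [idw euw nop]] := K1 k ck.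
move: gk; rewrite -idw K3 // hj => hw.
have [_ H2] := fstar_elim (IH d w (leqnn d)).
have [hjs hr] := H2 j hw.
by split => //; apply/reach_step; exists w.
Qed.

Theorem lemma4p2 :
  forall kappa : nat, exists c b : nat, forall zeta : nat, 1 <= zeta ->
  exists A : Algorithm,
  forall (n : nat) (E : rel 'I_n) (id : 'I_n -> nat) (s : 'I_n) (ps : seq 'I_n),
    irreflexive E -> injective id -> (forall v, id v < n ^ kappa) ->
    is_shortest_path E s ps ->
    (forall (r : nat) (v w : 'I_n), r < c * zeta -> adj E v w ->
       size (alg_send A r (local_input E id s ps v) (hist E id s ps A r v) (id w))
         <= b * lg n) /\
    (forall (u : 'I_n) (d : nat), 1 <= d <= zeta ->
       is_fstar E s ps u d
         (alg_out A (local_input E id s ps u) (hist E id s ps A (c * zeta) u) d)).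
Proof.
move=> kappa; exists 1, 2 => zeta hz; exists (Alg kappa).
move=> n E id s ps irr inj hid hsp; have U := uniq_ps hsp; split.
  move=> r v w _ _ /=; case: (Fv _ _ _ _) => [j|] //=; rewrite size_enc /lg; lia.
move=> u d /andP[_ hd]; rewrite mul1n; exact: main.
Qed.
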